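(* Let $k$ be a positive integer such that $k+1$ is an odd prime, and let $p>k^2+k$ be an odd prime. Let $(u_1,\ldots,u_k)\in\mathbb{Z}_{>0}^k$ satisfy $\gcd(u_1,\ldots,u_k)=1$ and $u_i\equiv i\pmod p$ for all $i=1,\ldots,k$. Then there is a real number $t$ with $\lVert t u_i\rVert\ge\frac1{k+1}$ for all $i=1,\ldots,k$.
   Context: For $x\in\mathbb{R}$, $\lVert x\rVert$ denotes the distance from $x$ to the nearest integer. *)

(* Defs.v *)
From Stdlib Require Import Reals ZArith Znumtheory.
Open Scope R_scope.

(* floor of x : the unique integer n with IZR n <= x < IZR n + 1 (Stdlib: up x - 1) *)
Definition floorR (x : R) : Z := (up x - 1)%Z.

Definition dist_int (x : R) : R :=
  Rmin (x - IZR (floorR x)) (IZR (floorR x) + 1 - x).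

Definition gcd_one (k : nat) (u : nat -> Z) : Prop :=
  forall d : Z, (forall i : nat, (1 <= i <= k)%nat -> (d | u i)%Z) -> (d | 1)%Z.

(* Main.v *)
Require Import Defs.
From Stdlib Require Import Reals ZArith Znumtheory.
Open Scope R_scope.
From Stdlib Require Import Lia Lra.
From mathcomp Require all_boot all_order all_algebra all_field zify.
Module MC.
Import all_boot all_order all_algebra all_field zify.
Set Implicit Arguments. Unset Strict Implicit. Unset Printing Implicit Defensive.
Import GRing.Theory Num.Theory.
Local Open Scope ring_scope.

Lemma dvd_conv (d m : nat) : (d %| m)%N <-> (Z.of_nat d | Z.of_nat m)%Z.
Proof.
split.
  by move/dvdnP => [c ->]; exists (Z.of_nat c); lia.
move=> [z hz]; apply/dvdnP.
case: d hz => [|d] hz.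
  by exists 0%N; lia.
exists (Z.to_nat z); lia.
Qed.

Lemma prime_conv (q : nat) : Znumtheory.prime (Z.of_nat q) -> prime q.
Proof.
move=> hp; have h2 := prime_ge_2 _ hp.
apply/primeP; split; first by lia.
move=> d /dvd_conv hd.
have := prime_divisors _ hp _ hd; lia.
Qed.

Section PS.
Variable F : finFieldType.
Hypothesis cardF0 : (#|F|%:R : F) = 0.

Lemma nz_unity (x : F) : x != 0 -> x ^+ #|F|.-1 = 1.
Proof.
move=> xnz; apply: (mulfI xnz); rewrite -exprS prednK ?expf_card ?mulr1 //.
by apply/card_gt0P; exists 0.
Qed.

Lemma card_nz : #|[pred x : F | x != 0]| = #|F|.-1.
Proof.
rewrite -(cardC1 (0 : F)); apply: eq_card => x; rewrite !inE //.
Qed.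

Lemma psum_lt (j : nat) : (j < #|F|.-1)%N -> \sum_(x : F) x ^+ j = 0.
Proof.
case: j => [_|j hj].
  by rewrite (eq_bigr (fun _ => 1)) ?sumr_const ?card_ord // => x _; rewrite expr0.
have [a /andP[anz aj]] : exists a : F, (a != 0) && (a ^+ j.+1 != 1).
  case: (pickP [pred a : F | (a != 0) && (a ^+ j.+1 != 1)]) => [a Ha|H]; first by exists a.
  have := @max_unity_roots F j.+1 (enum [pred x : F | x != 0]) isT.
  rewrite enum_uniq -cardE card_nz => /(_ _ isT).
  rewrite leqNgt hj => /implyP; rewrite implybF => /negP []; apply/allP => x.
  rewrite mem_enum inE => xnz; have := H x; rewrite /= xnz /= => /negbFE.
  by rewrite unity_rootE.
have : \sum_(x : F) x ^+ j.+1 = a ^+ j.+1 * \sum_(x : F) x ^+ j.+1.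
  rewrite mulr_sumr (reindex_inj (mulfI anz)) /=.
  by apply: eq_bigr => x _; rewrite exprMn.
move/eqP; rewrite -subr_eq0 -{1}(mul1r (\sum__ _)) -mulrBl mulf_eq0 subr_eq0 eq_sym.
by rewrite (negbTE aj) => /eqP.
Qed.

Lemma psum_top : \sum_(x : F) x ^+ #|F|.-1 = -1.
Proof.
rewrite (bigD1 0) //= expr0n.
have n1 : #|F|.-1 != 0%N.
  rewrite -card_nz; apply/eqP => /card0_eq /(_ 1); rewrite !inE oner_eq0 //.
rewrite (negbTE n1) add0r (eq_bigr (fun _ => 1)); last by move=> x xnz; rewrite nz_unity.
rewrite sumr_const; have -> : #|[pred i : F | i != 0]| = #|F|.-1 by rewrite -card_nz.
apply/eqP; rewrite -subr_eq0 opprK -mulrSr prednK ?cardF0 //.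
by apply/card_gt0P; exists 0.
Qed.

Lemma sum_horner (P : {poly F}) : (size P <= #|F|)%N ->
  \sum_(z : F) P.[z] = - P`_(#|F|.-1).
Proof.
move=> sP.
have hc : (0 < #|F|)%N by apply/card_gt0P; exists 0.
transitivity (\sum_(z : F) \sum_(i < #|F|) P`_i * z ^+ i).
  apply: eq_bigr => z _; rewrite horner_coef.
  rewrite (big_ord_widen #|F| (fun i => P`_i * z ^+ i) sP) big_mkcond /=.
  apply: eq_bigr => i _; case: ifP => // /negbT; rewrite -leqNgt => hi.
  by rewrite nth_default ?mul0r.
rewrite exchange_big /=.
move: (prednK hc) => hn; move: (psum_lt) (psum_top); rewrite -hn => pl pt.
rewrite big_ord_recr /= big1 ?add0r; last first.
  by move=> i _; rewrite -mulr_sumr pl ?mulr0 //= ltn_ord.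
by rewrite -mulr_sumr pt mulrN1.
Qed.
End PS.

Section Key.
Variable F : finFieldType.
Hypothesis cardF0 : (#|F|%:R : F) = 0.
Hypothesis charF : forall m, (0 < m < #|F|)%N -> (m%:R : F) != 0.
Hypothesis oddF : odd #|F|.
Variable v : F -> F.

Definition dd (z x : F) := v x - z * x.
Definition NZ := [set x : F | x != 0].
Definition fac (x : F) : {poly F} := (-x) *: 'X + (v x)%:P.

Lemma size_fac x : x != 0 -> size (fac x) = 2%N.
Proof.
move=> xnz; rewrite /fac size_addl size_scale ?oppr_eq0 ?size_polyX //.
by apply: leq_ltn_trans (size_polyC_leq1 _) _.
Qed.

Lemma lead_fac x : x != 0 -> lead_coef (fac x) = -x.
Proof.
move=> xnz; rewrite /fac lead_coefDl ?lead_coefZ ?lead_coefX ?mulr1 //.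
rewrite size_scale ?oppr_eq0 ?size_polyX //.
by apply: leq_ltn_trans (size_polyC_leq1 _) _.
Qed.

Lemma sumG : \sum_(z : F) \prod_(x in NZ) dd z x = - \prod_(x in NZ) (- x).
Proof.
have cN : #|NZ| = #|F|.-1 by rewrite -card_nz; apply: eq_card => x; rewrite !inE.
have hc : (0 < #|F|)%N by apply/card_gt0P; exists 0.
set Gp := \prod_(x in NZ) fac x.
have sG : size Gp = #|F|.
  rewrite size_prod; last by move=> x; rewrite inE => xnz; rewrite -size_poly_eq0 size_fac.
  rewrite (eq_bigr (fun _ => 2%N)); last by move=> x; rewrite inE => xnz; rewrite size_fac.
  by rewrite sum_nat_const cN muln2 -addnn -addSn addnK prednK.
transitivity (\sum_(z : F) Gp.[z]).
  apply: eq_bigr => z _; rewrite horner_prod; apply: eq_bigr => x _.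
  by rewrite /fac hornerD hornerZ hornerX hornerC /dd mulNr mulrC addrC.
rewrite sum_horner ?sG //.
have -> : Gp`_(#|F|.-1) = lead_coef Gp by rewrite lead_coefE sG.
rewrite lead_coef_prod; congr (- _); apply: eq_bigr => x; rewrite inE => xnz.
by rewrite lead_fac.
Qed.


Lemma good_prod z : (forall x, x != 0 -> dd z x != 0) -> {in NZ &, injective (dd z)} ->
  \prod_(x in NZ) dd z x = \prod_(x in NZ) x.
Proof.
move=> hnz hinj.
have E : [set dd z x | x in NZ] = NZ.
  apply/eqP; rewrite eqEcard; apply/andP; split.
    apply/subsetP => y /imsetP [x]; rewrite inE => xnz ->; rewrite inE hnz //.
  by rewrite (card_in_imset hinj).
by rewrite -[in RHS]E big_imset.
Qed.

Lemma key : (exists x, (x != 0) && (v x == 0)) -> (exists x, (x != 0) && (v x != 0)) ->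
  exists z, (forall x, x != 0 -> dd z x != 0) /\ ~ {in NZ &, injective (dd z)}.
Proof.
move=> [x0 /andP [x0nz /eqP vx0]] [x1 /andP [x1nz vx1]].
set good := [pred z : F | [forall x, (x != 0) ==> (dd z x != 0)]].
have goodP z : reflect (forall x, x != 0 -> dd z x != 0) (good z).
  apply: (iffP forallP) => H x; [move=> xnz; exact: (implyP (H x) xnz)| by apply/implyP; apply: H].
case: (pickP [pred z | good z && ~~ [forall x, forall y, ((x != 0) && (y != 0) && (dd z x == dd z y)) ==> (x == y)]]).
  move=> z /andP [/goodP gz ninj]; exists z; split => // hinj; move/negP: ninj; apply.
  apply/forallP => x; apply/forallP => y; apply/implyP => /andP [/andP [xnz ynz] /eqP e].
  by apply/eqP; apply: hinj; rewrite ?inE.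
move=> H.
have Hinj z : good z -> {in NZ &, injective (dd z)}.
  move=> gz; have := H z; move=> /negbT; rewrite negb_and; move: gz => ->; rewrite /= negbK => /forallP Hz x y.
  rewrite !inE => xnz ynz e; have := Hz x => /forallP /(_ y) /implyP H2; apply/eqP; apply: H2.
  by rewrite xnz ynz e eqxx.
set Pn := \prod_(x in NZ) x.
have Pnz : Pn != 0 by apply/prodf_neq0 => x; rewrite inE.
have S1 : \sum_(z : F) \prod_(x in NZ) dd z x = (#|good|)%:R * Pn.
  rewrite (bigID good) /= [X in _ + X]big1 ?addr0; last first.
    move=> z /goodP gz; case: (pickP [pred x : F | (x != 0) && (dd z x == 0)]).
      move=> x /andP [xnz /eqP e]; rewrite (bigD1 x) ?inE //= e mul0r //.
    move=> Hz; exfalso; apply: gz => x xnz; have := Hz x; rewrite /= xnz /= => ->. done.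
  rewrite (eq_bigr (fun _ => Pn)); last by move=> z gz; rewrite good_prod //; [apply/goodP | apply: Hinj].
  by rewrite sumr_const mulr_natl.
have S2 : \prod_(x in NZ) (- x) = Pn.
  rewrite (eq_bigr (fun x => (-1) * x)); last by move=> x _; rewrite mulN1r.
  rewrite big_split /= prodr_const.
  have -> : #|NZ| = #|F|.-1 by rewrite -card_nz; apply: eq_card => x; rewrite !inE.
  rewrite -signr_odd; move: oddF; case: #|F| => // n /= on; rewrite (negbTE on) expr0 mul1r //.
have := sumG; rewrite S1 S2 => /eqP; rewrite -subr_eq0 opprK -{2}(mul1r Pn) -mulrDl natr1 mulf_eq0 (negbTE Pnz) orbF.
have bad0 : ~~ good 0.
  apply/negP => /goodP /(_ x0 x0nz); rewrite /dd vx0 mul0r subr0 eqxx //.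
have bad1 : ~~ good (v x1 / x1).
  apply/negP => /goodP /(_ x1 x1nz); rewrite /dd divfK // subrr eqxx //.
have n01 : (v x1 / x1) != 0 by rewrite mulf_neq0 // invr_eq0.
have cg : (#|good|.+1 < #|F|)%N.
  have : (#|good| + #|[set (0%R : F); (v x1 / x1)%R]| <= #|F|)%N.
    rewrite -(cardC good) leq_add2l; apply: subset_leq_card; apply/subsetP => z.
    rewrite !inE => /orP [] /eqP ->; [exact: bad0 | exact: bad1].
  by rewrite cards2 eq_sym n01 addn2.
by rewrite (negbTE (charF _)) //.
Qed.

Lemma mainF : (exists x, (x != 0) && (v x != 0)) ->
  exists B J : F, forall x, x != 0 -> (B * v x + J * x != 0) && ((J == 0) || (B * v x + J * x != -1)).
Proof.
move=> ex1.
case: (pickP [pred x : F | (x != 0) && (v x == 0)]); last first.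
  move=> H; exists 1, 0 => x xnz; rewrite mul1r mul0r addr0 eqxx /= andbT.
  by have := H x; rewrite /= xnz /= => ->.
move=> x0 h0; have [z [hnz hinj]] := key (ex_intro _ x0 h0) ex1.
have : ~~ (NZ \subset [set dd z x | x in NZ]).
  apply/negP => sub; apply: hinj; apply/imset_injP; rewrite eqn_leq; apply/andP; split.
    exact: leq_imset_card.
  exact: subset_leq_card.
case/subsetPn => e; rewrite inE => enz enot.
exists (- e^-1), (e^-1 * z) => x xnz.
have E : - e^-1 * v x + e^-1 * z * x = - e^-1 * dd z x.
  by rewrite /dd mulrBr !mulNr mulrA opprK.
rewrite E; apply/andP; split.
  by rewrite mulf_neq0 ?hnz // oppr_eq0 invr_eq0.
apply/orP; right; apply/negP => /eqP h.
move/negP: enot; apply; apply/imsetP; exists x; rewrite ?inE //.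
apply: (mulfI (_ : - e^-1 != 0)); first by rewrite oppr_eq0 invr_eq0.
  by rewrite h mulNr mulVf.
Qed.

End Key.

Lemma Fp_eq0 q (pq : prime q) m : ((m%:R : 'F_q) == 0) = (q %| m)%N.
Proof.
apply/eqP/idP => [h|h].
  by have := val_Fp_nat pq m; rewrite h /= => /esym /eqP.
by apply: val_inj; rewrite /= (val_Fp_nat pq) (eqP h).
Qed.

Lemma combN (q : nat) (n : nat -> nat) : prime q -> odd q ->
  (exists i, (0 < i < q)%N /\ ~~ (q %| n i)%N) ->
  exists b j : nat, forall i, (0 < i < q)%N -> ~~ (q %| b * n i + j * i)%N /\
     ((q %| j)%N \/ ~~ (q %| b * n i + j * i + 1)%N).
Proof.
move=> pq oq [i0 [hi0 ndv]].
have cF : #|'F_q| = q by rewrite card_Fp.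
have cardF0 : (#|'F_q|%:R : 'F_q) = 0 by rewrite cF pchar_Fp_0.
have charF : forall m, (0 < m < #|'F_q|)%N -> (m%:R : 'F_q) != 0.
  move=> m; rewrite cF => /andP [m0 mq]; rewrite Fp_eq0 //; apply/negP => /dvdn_leq.
  by move/(_ m0); rewrite leqNgt mq.
have oddF : odd #|'F_q| by rewrite cF.
set v := fun x : 'F_q => ((n (val x))%:R : 'F_q).
have ex1 : exists x, (x != 0) && (v x != 0).
  exists (i0%:R); have vi : val (i0%:R : 'F_q) = i0 by rewrite /= (val_Fp_nat pq) modn_small //; case/andP: hi0.
  rewrite /v vi Fp_eq0 // ndv andbT; apply/negP => /eqP h; move: vi; rewrite h /=.
  by move=> e; move: hi0; rewrite -e.
have [B [J H]] := mainF cardF0 charF oddF ex1.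
exists (val B), (val J) => i hi.
have vi : val (i%:R : 'F_q) = i by rewrite /= (val_Fp_nat pq) modn_small //; case/andP: hi.
have inz : (i%:R : 'F_q) != 0.
  apply/negP => /eqP h; move: vi; rewrite h /= => e; by move: hi; rewrite -e.
have := H _ inz; rewrite /v vi.
have E : B * (n i)%:R + J * i%:R = ((val B * n i + val J * i)%:R : 'F_q).
  by rewrite natrD !natrM !natr_Zp.
rewrite E Fp_eq0 // => /andP [h1 h2]; split => //.
case/orP: h2 => h2; [left | right].
  by rewrite -Fp_eq0 // natr_Zp.
apply/negP => /dvdnP [c hc]; move/negP: h2; apply; apply/eqP.
by apply/eqP; rewrite -subr_eq0 opprK natr1 -addn1 hc natrM pchar_Fp_0 // mulr0.
Qed.

Local Open Scope Z_scope.
Lemma combZ (k : nat) (u : nat -> Z) :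
  Znumtheory.prime (Z.of_nat k + 1) -> (Z.of_nat k + 1 <> 2) ->
  (forall i : nat, (1 <= i)%coq_nat /\ (i <= k)%coq_nat -> (u i > 0)) ->
  (exists i : nat, ((1 <= i)%coq_nat /\ (i <= k)%coq_nat) /\ ~ (Z.of_nat k + 1 | u i)) ->
  exists b j : nat, forall i : nat, (1 <= i)%coq_nat /\ (i <= k)%coq_nat ->
    ~ (Z.of_nat k + 1 | Z.of_nat b * u i + Z.of_nat j * Z.of_nat i) /\
    ((Z.of_nat k + 1 | Z.of_nat j) \/
     ~ (Z.of_nat k + 1 | Z.of_nat b * u i + Z.of_nat j * Z.of_nat i + 1)).
Proof.
move=> hp h2 hpos [i0 [hi0 hn0]].
have eq1 : Z.of_nat k.+1 = (Z.of_nat k + 1) by lia.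
have pq : prime k.+1 by apply: prime_conv; rewrite eq1.
have oq : odd k.+1.
  by case: (even_prime pq) => // e; exfalso; apply: h2; rewrite -eq1 e.
have ex : exists i, (0 < i < k.+1)%N /\ ~~ (k.+1 %| Z.to_nat (u i))%N.
  exists i0; split; first by apply/andP; split; apply/ltP; lia.
  apply/negP => /dvd_conv; rewrite eq1 Z2Nat.id; last by have := hpos i0 hi0; lia.
  exact: hn0.
have [b [j H]] := combN pq oq ex.
exists b, j => i hi.
have hi' : (0 < i < k.+1)%N by apply/andP; split; apply/ltP; lia.
have [H1 H2] := H i hi'.
have up := hpos i hi.
have E1 : Z.of_nat (b * Z.to_nat (u i) + j * i)%N = (Z.of_nat b * u i + Z.of_nat j * Z.of_nat i) by lia.
have E2 : Z.of_nat (b * Z.to_nat (u i) + j * i + 1)%N = (Z.of_nat b * u i + Z.of_nat j * Z.of_nat i + 1) by lia.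
split.
  by move=> hd; move/negP: H1; apply; apply/dvd_conv; rewrite E1 eq1.
case: H2 => H2; [left | right].
  by move/dvd_conv: H2; rewrite eq1.
by move=> hd; move/negP: H2; apply; apply/dvd_conv; rewrite E2 eq1.
Qed.
End MC.

Open Scope R_scope.

Lemma dist_lemma (K R P Q : Z) : (P > 0)%Z -> (Q >= 2)%Z -> (P <= R <= P*Q - P)%Z ->
  dist_int (IZR K + IZR R / IZR (P*Q)) >= 1 / IZR Q.
Proof.
intros hP hQ hR.
assert (hP' : 0 < IZR P) by (apply IZR_lt; lia).
assert (hQ' : 2 <= IZR Q) by (apply IZR_le; lia).
assert (hR1 : IZR P <= IZR R) by (apply IZR_le; lia).
assert (hR2 : IZR R <= IZR P * IZR Q - IZR P).
{ rewrite <- mult_IZR, <- minus_IZR. apply IZR_le; lia. }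
set (x := IZR R / IZR (P*Q)).
assert (hx1 : 1 / IZR Q <= x).
{ unfold x; rewrite mult_IZR.
  assert (e : x - 1 / IZR Q = (IZR R - IZR P) / (IZR P * IZR Q)).
  { unfold x; rewrite mult_IZR; field; lra. }
  unfold x in e; rewrite mult_IZR in e.
  assert (0 <= (IZR R - IZR P) / (IZR P * IZR Q)).
  { apply Rmult_le_pos; [lra|]. left; apply Rinv_0_lt_compat; nra. }
  lra. }
assert (hx2 : x <= 1 - 1 / IZR Q).
{ assert (e : 1 - 1 / IZR Q - x = (IZR P * IZR Q - IZR P - IZR R) / (IZR P * IZR Q)).
  { unfold x; rewrite mult_IZR; field; lra. }
  assert (0 <= (IZR P * IZR Q - IZR P - IZR R) / (IZR P * IZR Q)).
  { apply Rmult_le_pos; [lra|]. left; apply Rinv_0_lt_compat; nra. }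
  lra. }
assert (hq0 : 0 < 1 / IZR Q) by (apply Rdiv_lt_0_compat; lra).
assert (hq1 : 1 / IZR Q <= 1/2).
{ unfold Rdiv; rewrite !Rmult_1_l; apply Rinv_le_contravar; lra. }
assert (hfl : floorR (IZR K + x) = K).
{ unfold floorR.
  rewrite <- (tech_up (IZR K + x) (K + 1)); [lia | rewrite plus_IZR; lra | rewrite plus_IZR; lra]. }
unfold dist_int; rewrite hfl.
unfold Rmin; destruct (Rle_dec _ _); lra.
Qed.

Theorem proposition1p2 (k : nat) (p : Z) (u : nat -> Z) :
  (1 <= k)%nat ->
  prime (Z.of_nat k + 1) -> (Z.of_nat k + 1 <> 2)%Z ->
  prime p -> (p <> 2)%Z ->
  (p > Z.of_nat k * Z.of_nat k + Z.of_nat k)%Z ->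
  (forall i : nat, (1 <= i <= k)%nat -> (u i > 0)%Z) ->
  gcd_one k u ->
  (forall i : nat, (1 <= i <= k)%nat -> (u i mod p = Z.of_nat i mod p)%Z) ->
  exists t : R, forall i : nat, (1 <= i <= k)%nat ->
    dist_int (t * IZR (u i)) >= 1 / INR (k + 1).
Proof.
intros hk hq hq2 hp hp2 hpk hpos hgcd hmod.
assert (hq3 := prime_ge_2 _ hq).
assert (ex : exists i : nat, (1 <= i <= k)%nat /\ ~ (Z.of_nat k + 1 | u i)%Z).
{ destruct (Classical_Prop.classic (exists i : nat, (1 <= i <= k)%nat /\ ~ (Z.of_nat k + 1 | u i)%Z)) as [H|H]; [exact H|].
  exfalso.
  assert (hd : (Z.of_nat k + 1 | 1)%Z).
  { apply hgcd; intros i hi.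
    destruct (Classical_Prop.classic (Z.of_nat k + 1 | u i)%Z) as [h|h]; [exact h|].
    exfalso; apply H; exists i; split; assumption. }
  apply Z.divide_pos_le in hd; lia. }
destruct (@MC.combZ k u hq hq2 hpos ex) as [b [j H]].
set (q := (Z.of_nat k + 1)%Z) in *.
set (c := ((- (Z.of_nat j * p)) mod q)%Z).
set (a := (- ((- (Z.of_nat j * p)) / q))%Z).
assert (hq0 : (q > 0)%Z) by lia.
assert (ha : (a * q = Z.of_nat j * p + c)%Z).
{ unfold a, c. assert (hh := Z.div_mod (- (Z.of_nat j * p)) q ltac:(lia)). lia. }
assert (hc : (0 <= c < q)%Z) by (apply Z.mod_pos_bound; lia).
set (M := (Z.of_nat b * p + a * q)%Z).
assert (hp0 : (p > 0)%Z) by (assert (h := prime_ge_2 _ hp); lia).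
exists (IZR M / IZR (p * q)).
intros i hi.
destruct (H i hi) as [H1 H2].
set (N := (Z.of_nat b * u i + Z.of_nat j * Z.of_nat i)%Z) in *.
set (m := (u i / p)%Z).
assert (hu : (u i = p * m + Z.of_nat i)%Z).
{ assert (hh := Z.div_mod (u i) p ltac:(lia)).
  rewrite (hmod i hi) in hh. rewrite Z.mod_small in hh; [exact hh|].
  split; [lia|]. nia. }
set (s := (N / q)%Z). set (r := (N mod q)%Z).
assert (hN : (N = q * s + r)%Z) by (apply Z.div_mod; lia).
assert (hr : (0 <= r < q)%Z) by (apply Z.mod_pos_bound; lia).
assert (hr1 : (r <> 0)%Z).
{ intro e; apply H1. apply Z.mod_divide; [lia|exact e]. }
set (R0 := (p * r + c * Z.of_nat i)%Z).
assert (hiK : (Z.of_nat i <= Z.of_nat k)%Z) by lia.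
assert (hRb : (p <= R0 <= p * q - p)%Z).
{ destruct H2 as [H2|H2].
  - assert (c0 : c = 0%Z).
    { unfold c. apply Z.mod_divide; [lia|].
      apply Z.divide_opp_r. apply Z.divide_mul_l. exact H2. }
    unfold R0; rewrite c0. nia.
  - assert (hr2 : (r <> q - 1)%Z).
    { intro e; apply H2. exists (s + 1)%Z. lia. }
    unfold R0. nia. }
assert (hid : (M * u i = p * q * (s + a * m) + R0)%Z).
{ assert (e1 : r = (N - q * s)%Z) by lia.
  assert (e2 : c = (a * q - Z.of_nat j * p)%Z) by lia.
  unfold R0; rewrite e1, e2; unfold N, M; rewrite hu; ring. }
assert (hpq : IZR (p * q) <> 0) by (apply not_0_IZR; nia).
assert (et : IZR M / IZR (p * q) * IZR (u i) = IZR (s + a * m) + IZR R0 / IZR (p * q)).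
{ assert (e : IZR M * IZR (u i) = IZR (p * q) * IZR (s + a * m) + IZR R0).
  { rewrite <- !mult_IZR, <- plus_IZR. f_equal. rewrite hid. ring. }
  unfold Rdiv; rewrite Rmult_assoc, (Rmult_comm (/ _)), <- Rmult_assoc, e. field. exact hpq. }
rewrite et.
assert (eq : INR (k + 1) = IZR q).
{ rewrite INR_IZR_INZ. f_equal. unfold q. lia. }
rewrite eq.
apply dist_lemma; lia.
Qed.
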